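(* Let $n\ge1$ and let $A$ be a set with an $(n+1)$-ary operation $\theta$, binary operations $\alpha_1,\dots,\alpha_n$ and elements $e_1,\dots,e_n$ such that $\alpha_i(a,a)=e_i$ and $\theta(\alpha_1(a,b),\dots,\alpha_n(a,b),b)=a$ for all $a,b\in A$. The following conditions are equivalent: (i) for every $b\in A$ the map $\theta_b:A^n\to A$, $\theta_b(x_1,\dots,x_n)=\theta(x_1,\dots,x_n,b)$, is a bijection; (ii) for all $a,b\in A$, the equation $\theta(x_1,\dots,x_n,b)=a$ in the unknowns $x_1,\dots,x_n$ has a unique solution; (iii) for all $b,a_1,\dots,a_n\in A$, the system of equations $\alpha_i(x,b)=a_i$ $(1\le i\le n)$ in one unknown $x$ has a (unique) solution; (iv) for all $a_1,\dots,a_n,b\in A$ and every $i$ with $1\le i\le n$, $\alpha_i(\theta(a_1,\dots,a_n,b),b)=a_i$.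
   Context: The setting is that of an algebra $A$ in a protomodular variety, with $\theta,\alpha_i,e_i$ the operations and constants witnessing protomodularity as described in the claim. *)

(* Defs.v *)
From mathcomp Require Import all_boot.
Set Implicit Arguments.
Unset Strict Implicit.
Unset Printing Implicit Defensive.
(* Convention: an (n+1)-ary operation theta on A is represented as
   theta : ('I_n -> A) -> A -> A, the first n arguments packed as a
   function on 'I_n (= {0,..,n-1}, i.e. indices 1..n shifted), the last
   argument b separate. *)

(* Main.v *)
Require Import Defs.
From mathcomp Require Import all_boot.
From Stdlib Require Import FunctionalExtensionality.

Theorem lemma3p12 (A : Type) (n : nat) (n_ge1 : 1 <= n)
  (theta : ('I_n -> A) -> A -> A) (alpha : 'I_n -> A -> A -> A) (e : 'I_n -> A)
  (alpha_diag : forall (i : 'I_n) (a : A), alpha i a a = e i)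
  (theta_alpha : forall a b : A, theta (fun i => alpha i a b) b = a) :
  [<->
    (* (i) *) forall b : A, bijective (fun x : 'I_n -> A => theta x b);
    (* (ii) *) forall a b : A, exists x : 'I_n -> A,
                 theta x b = a /\ forall y : 'I_n -> A, theta y b = a -> y = x;
    (* (iii) *) forall (b : A) (a : 'I_n -> A), exists x : A,
                 (forall i, alpha i x b = a i) /\
                 forall y : A, (forall i, alpha i y b = a i) -> y = x;
    (* (iv) *) forall (a : 'I_n -> A) (b : A) (i : 'I_n),
                 alpha i (theta a b) b = a i ].
Proof.
have feq : forall f g : 'I_n -> A, (forall i, f i = g i) -> f = g.
  by move=> f g H; apply: functional_extensionality.
tfae.
- move=> H a b; case: (H b) => g gK Kg.
  exists (g a); split; first by rewrite Kg.
  by move=> y <-; rewrite gK.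
- move=> H b a.
  have [x [Hx Hu]] := H (theta a b) b.
  have E1 : a = x by apply: Hu.
  have E2 : (fun i => alpha i (theta a b) b) = x by apply: Hu; rewrite theta_alpha.
  exists (theta a b); split.
    by move=> i; rewrite -[alpha i _ _]/((fun i => alpha i (theta a b) b) i) E2 E1.
  move=> y Hy; rewrite -(theta_alpha y b).
  by congr (theta _ b); apply: feq.
- move=> H a b i.
  have [x [Hx _]] := H b a.
  have -> : theta a b = x.
    rewrite -(theta_alpha x b); congr (theta _ b); apply: feq => j; by rewrite Hx.
  exact: Hx.
- move=> H b; exists (fun a => fun i => alpha i a b).
    by move=> x; apply: feq => i; rewrite H.
  by move=> a; rewrite theta_alpha.
Qed.
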